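(* Let $t_0>0$. A tame power series $\alpha$ is uniquely determined by the sequence of values $B_\alpha[n;t_0]$, $n\ge0$: if $\alpha,\alpha'$ are tame power series with $B_\alpha[n;t_0]=B_{\alpha'}[n;t_0]$ for all $n\ge0$, then $\alpha=\alpha'$.
   Context: A power series $\alpha(z)=\sum_{n\ge0}a_{n+1}z^n$ is tame if it converges on the open unit disk, extends holomorphically to a punctured neighborhood of $z=1$ with a pole of order $\nu\ge0$ at $1$ ($\nu=0$ meaning holomorphic at $1$), and $(z-1)^\nu\alpha(z)$ equals, on an open neighborhood of $(0,1]$, a multi-power series $\sum_{\mathbf i\in\mathbb Z^N_{\ge0}}c_{\mathbf i}\prod_{j=1}^N(z^{e_j}-1)^{i_j}$ (some $N\ge1$, $e_j\in\mathbb Z_{>0}$) converging absolutely and uniformly there. Bernoulli polynomials of a tame $\alpha$ with pole order $\nu$ (each series uses its own $\nu$): $\sum_{n\ge0}B_\alpha[n;t]\frac{u^n}{n!}=(-u)^\nu\alpha(e^u)e^{tu}$ near $u=0$. *)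

(* Defs.v *)
From Stdlib Require Import Reals List Arith Factorial.
Import ListNotations.
Open Scope R_scope.

Record Cx := mkC { re : R ; im : R }.

Definition RtoC (x : R) : Cx := mkC x 0.
Definition C0 : Cx := RtoC 0.
Definition C1 : Cx := RtoC 1.
Definition Cadd (z w : Cx) : Cx := mkC (re z + re w) (im z + im w).
Definition Copp (z : Cx) : Cx := mkC (- re z) (- im z).
Definition Csub (z w : Cx) : Cx := Cadd z (Copp w).
Definition Cmul (z w : Cx) : Cx :=
  mkC (re z * re w - im z * im w) (re z * im w + im z * re w).
Definition Cinv (z : Cx) : Cx :=
  mkC (re z / (re z ^ 2 + im z ^ 2)) (- im z / (re z ^ 2 + im z ^ 2)).
Definition Cdiv (z w : Cx) : Cx := Cmul z (Cinv w).
Definition Cnorm (z : Cx) : R := sqrt (re z ^ 2 + im z ^ 2).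
Fixpoint Cpow (z : Cx) (n : nat) : Cx :=
  match n with O => C1 | S k => Cmul z (Cpow z k) end.
Definition Cexp (z : Cx) : Cx :=
  mkC (exp (re z) * cos (im z)) (exp (re z) * sin (im z)).

Definition Cset := Cx -> Prop.

Definition Copen (S : Cset) : Prop :=
  forall z, S z -> exists d, d > 0 /\ forall w, Cnorm (Csub w z) < d -> S w.

Definition Cdiff_at (f : Cx -> Cx) (z : Cx) : Prop :=
  exists L : Cx, forall eps, eps > 0 -> exists d, d > 0 /\
    forall h, h <> C0 -> Cnorm h < d ->
      Cnorm (Csub (Cdiv (Csub (f (Cadd z h)) (f z)) h) L) < eps.

Definition holo_on (f : Cx -> Cx) (S : Cset) : Prop :=
  Copen S /\ forall z, S z -> Cdiff_at f z.

Definition Cseq_cv (s : nat -> Cx) (l : Cx) : Prop :=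
  forall eps, eps > 0 -> exists N, forall n, (n >= N)%nat -> Cnorm (Csub (s n) l) < eps.

Fixpoint psum (f : nat -> Cx) (n : nat) : Cx :=
  match n with O => C0 | S k => Cadd (psum f k) (f k) end.

Definition series_cv (f : nat -> Cx) (l : Cx) : Prop := Cseq_cv (psum f) l.

Definition unit_disk : Cset := fun z => Cnorm z < 1.
Definition disk (c : Cx) (r : R) : Cset := fun z => Cnorm (Csub z c) < r.
Definition punct_disk (c : Cx) (r : R) : Cset :=
  fun z => z <> c /\ Cnorm (Csub z c) < r.

(** a multi-index for N variables is a list of naturals of length N *)
Definition mterm (N : nat) (e : nat -> nat) (c : list nat -> Cx) (z : Cx)
    (i : list nat) : Cx :=
  Cmul (c i)
    (fold_right Cmul C1
       (map (fun j => Cpow (Csub (Cpow z (e j)) C1) (nth j i O)) (seq 0 N))).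

Definition valid_indices (N : nat) (G : list (list nat)) : Prop :=
  NoDup G /\ forall i, In i G -> length i = N.

Definition Csum_list (l : list Cx) : Cx := fold_right Cadd C0 l.
Definition Rsum_list (l : list R) : R := fold_right Rplus 0 l.

(** On U, the multi-power series sum_{i in N^N} c_i prod_j (z^{e_j}-1)^{i_j}
    converges absolutely and uniformly (as an unordered sum over N^N),
    with sum v z. *)
Definition multi_series_abs_unif (N : nat) (e : nat -> nat) (c : list nat -> Cx)
    (U : Cset) (v : Cx -> Cx) : Prop :=
  (forall eps, eps > 0 -> exists F0, valid_indices N F0 /\
     forall z, U z -> forall G, valid_indices N G -> incl F0 G ->
       Cnorm (Csub (Csum_list (map (mterm N e c z) G)) (v z)) < eps) /\
  (* uniform absolute convergence: uniformly small tails of sum of |terms| *)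
  (forall eps, eps > 0 -> exists F0, valid_indices N F0 /\
     forall z, U z -> forall G, valid_indices N G ->
       (forall i, In i G -> ~ In i F0) ->
       Rsum_list (map (fun i => Cnorm (mterm N e c z i)) G) < eps).

(** alpha(z) = sum_n a n z^n  (here a n stands for the paper's a_{n+1}).
    [tame_ext a F g r nu]: the series converges on the unit disk to F, F is
    holomorphic on (unit disk) ∪ (punctured disk around 1 of radius r), and
    (z-1)^nu F(z) extends holomorphically (as g) to the full disk around 1;
    nu = 0 means holomorphic at 1, nu > 0 means a pole of exact order nu
    (g 1 <> 0). *)
Definition tame_ext (a : nat -> Cx) (F g : Cx -> Cx) (r : R) (nu : nat) : Prop :=
  r > 0 /\
  (forall z, unit_disk z -> series_cv (fun n => Cmul (a n) (Cpow z n)) (F z)) /\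
  holo_on F (fun z => unit_disk z \/ punct_disk C1 r z) /\
  holo_on g (disk C1 r) /\
  (forall z, punct_disk C1 r z -> g z = Cmul (Cpow (Csub z C1) nu) (F z)) /\
  (nu = O \/ g C1 <> C0).

Definition reg_fun (F g : Cx -> Cx) (nu : nat) (z : Cx) : Cx :=
  Cmul (Cpow (Csub z C1) nu) (F z).

Definition tame (a : nat -> Cx) : Prop :=
  exists F g r nu, tame_ext a F g r nu /\
  exists (N : nat) (e : nat -> nat) (c : list nat -> Cx) (U : Cset),
    (N >= 1)%nat /\
    (forall j, (j < N)%nat -> (e j > 0)%nat) /\
    Copen U /\
    (forall x, 0 < x <= 1 -> U (RtoC x)) /\
    (forall z, U z -> unit_disk z \/ disk C1 r z) /\
    multi_series_abs_unif N e c U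
      (fun z => if Req_EM_T (re z) 1 then
                  if Req_EM_T (im z) 0 then g C1 else reg_fun F g nu z
                else reg_fun F g nu z).

(** [bernoulli a t b]: b n = B_alpha[n; t], i.e.
    sum_n b n u^n / n! = (-u)^nu alpha(e^u) e^{t u} for u near 0 (u <> 0,
    the value at u = 0 being the removable-singularity value). *)
Definition bernoulli (a : nat -> Cx) (t : R) (b : nat -> Cx) : Prop :=
  exists F g r nu, tame_ext a F g r nu /\
  exists rho, rho > 0 /\
    forall u, u <> C0 -> Cnorm u < rho ->
      series_cv (fun n => Cmul (Cdiv (b n) (RtoC (INR (fact n)))) (Cpow u n))
        (Cmul (Cmul (Cpow (Copp u) nu) (F (Cexp u))) (Cexp (Cmul (RtoC t) u))).

(* Main.v *)
Require Import Defs.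
From Coquelicot Require Import Coquelicot.
From Stdlib Require Import Reals Lra Lia Factorial Classical FunctionalExtensionality ZArith List.
Import Defs.
Open Scope R_scope.


Lemma scal_RR (u v : R) : scal u v = u * v. Proof. reflexivity. Qed.

Definition good (a : nat -> R) := Rbar_le (Finite 1) (CV_radius a).

Lemma good_lt a x : good a -> Rabs x < 1 -> Rbar_lt (Rabs x) (CV_radius a).
Proof. unfold good; intros H Hx; destruct (CV_radius a); simpl in *; lra. Qed.

Lemma ex_pseries_R a x : ex_pseries a x <-> ex_series (fun k => a k * x ^ k).
Proof.
  unfold ex_pseries; split; apply ex_series_ext; intro k;
  [| symmetry]; rewrite scal_RR, pow_n_pow; apply Rmult_comm.
Qed.

Lemma good_intro a : (forall x, 0 <= x < 1 -> ex_pseries a x) -> good a.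
Proof.
  intro H. unfold good. destruct (Rbar_le_lt_dec 1 (CV_radius a)) as [h|h]; auto.
  exfalso. generalize (CV_radius_ge_0 a). intro h0.
  destruct (CV_radius a) as [r| |] eqn:E; simpl in h, h0; try contradiction.
  set (x := (r + 1) / 2).
  apply (CV_disk_outside a x).
  - rewrite E; simpl. rewrite Rabs_pos_eq; unfold x; lra.
  - apply ex_series_lim_0. apply ex_pseries_R. apply H. unfold x; lra.
Qed.

Definition refl (a : nat -> R) n := (-1) ^ n * a n.

Lemma PSeries_refl a t : PSeries (refl a) t = PSeries a (- t).
Proof.
  unfold PSeries; apply Series_ext; intro k; unfold refl.
  replace (- t) with ((-1) * t) by ring. rewrite Rpow_mult_distr. ring.
Qed.

Lemma refl_term (a : nat -> R) k x : a k * (- x) ^ k = (-1) ^ k * a k * x ^ k.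
Proof. replace (- x) with ((-1) * x) by ring. rewrite Rpow_mult_distr. ring. Qed.

Lemma good_refl a : good a -> good (refl a).
Proof.
  intro H; apply good_intro; intros x Hx.
  apply ex_pseries_R.
  destruct (ex_pseries_R a (- x)) as [H1 _].
  assert (H2 := H1 (CV_radius_inside a (-x) (good_lt a (-x) H ltac:(rewrite Rabs_Ropp, Rabs_pos_eq; lra)))).
  revert H2; apply ex_series_ext; intro k. unfold refl. apply refl_term.
Qed.

Lemma cont_zero_left g e : continuity_pt g e ->
  (exists d, d > 0 /\ forall t, e - d < t < e -> g t = 0) -> g e = 0.
Proof.
  intros Hc [d [Hd Hz]].
  destruct (Req_dec (g e) 0) as [h|h]; auto. exfalso.
  destruct (Hc (Rabs (g e) / 2)) as [alp [Ha H']].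
  { apply Rabs_pos_lt in h; lra. }
  set (t := e - Rmin alp d / 2).
  assert (Hm1 := Rmin_l alp d). assert (Hm2 := Rmin_r alp d).
  assert (Hm0 : 0 < Rmin alp d) by (apply Rmin_glb_lt; lra).
  specialize (H' t). simpl in H'. unfold R_dist in H'.
  rewrite (Hz t) in H' by (unfold t; lra).
  assert (H0 : Rabs (0 - g e) < Rabs (g e) / 2).
  { apply H'. split. split. exact I. unfold t; lra.
    unfold t. replace (e - Rmin alp d / 2 - e) with (- (Rmin alp d / 2)) by ring.
    rewrite Rabs_Ropp, Rabs_pos_eq; lra. }
  rewrite Rminus_0_l, Rabs_Ropp in H0. apply Rabs_pos_lt in h. lra.
Qed.

Lemma deriv_zero_left b e : good b -> -1 < e <= 0 ->
  (forall t, -1 < t < e -> PSeries b t = 0) ->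
  forall m, Derive_n (PSeries b) m e = 0.
Proof.
  intros Hb He Hz m.
  rewrite Derive_n_PSeries by (apply good_lt; auto; rewrite Rabs_left1; lra).
  apply cont_zero_left.
  { apply PSeries_continuity. rewrite CV_radius_derive_n. apply good_lt; auto.
    rewrite Rabs_left1; lra. }
  exists (1 + e). split; [lra|]. intros t Ht.
  rewrite <- Derive_n_PSeries by (apply good_lt; auto; rewrite Rabs_left1; lra).
  destruct m as [|m]. simpl. apply Hz; lra.
  rewrite (Derive_n_ext_loc _ (fun _ => 0)). apply Derive_n_const.
  apply (locally_interval _ t (-1) e); simpl; try lra.
  intros y Hy1 Hy2; apply Hz; lra.
Qed.


Lemma sum_ge_term f n i : (forall k, 0 <= f k) -> (i <= n)%nat -> f i <= sum_f_R0 f n.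
Proof.
  intros Hf; induction n; intro Hi.
  - replace i with 0%nat by lia. simpl; lra.
  - simpl. destruct (Nat.eq_dec i (S n)) as [->|h].
    + assert (0 <= sum_f_R0 f n) by (apply cond_pos_sum; auto). lra.
    + assert (f i <= sum_f_R0 f n) by (apply IHn; lia). specialize (Hf (S n)). lra.
Qed.

Lemma C_nonneg n i : 0 <= C n i.
Proof.
  unfold C. apply Rlt_le. apply Rdiv_lt_0_compat. apply INR_fact_lt_0.
  apply Rmult_lt_0_compat; apply INR_fact_lt_0.
Qed.

Lemma fact_ratio k m d c : 0 <= d -> 0 <= c ->
  INR (fact (k + m)) / INR (fact k) * c ^ k * d ^ m <= INR (fact m) * (c + d) ^ (k + m).
Proof.
  intros Hd Hc. rewrite (Rplus_comm c d), binomial.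
  assert (Ht := sum_ge_term (fun i => C (k + m) i * d ^ i * c ^ (k + m - i)) (k + m) m).
  simpl in Ht. replace (k + m - m)%nat with k in Ht by lia.
  assert (Hcm : C (k + m) m * INR (fact m) = INR (fact (k + m)) / INR (fact k)).
  { unfold C. replace (k + m - m)%nat with k by lia.
    field. split; apply INR_fact_neq_0. }
  rewrite <- Hcm.
  assert (Hfm := INR_fact_lt_0 m).
  replace (C (k + m) m * INR (fact m) * c ^ k * d ^ m) with
      (INR (fact m) * (C (k + m) m * d ^ m * c ^ k)) by ring.
  apply Rmult_le_compat_l; [lra|]. apply Ht; [|lia].
  intro i. apply Rmult_le_pos. apply Rmult_le_pos. apply C_nonneg. apply pow_le; auto.
  apply pow_le; auto.
Qed.

Lemma deriv_bound b c : good b -> 0 <= c < 1 -> forall m z, Rabs z <= c ->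
  Rabs (Derive_n (PSeries b) m z) <=
  INR (fact m) / ((1 - c) / 2) ^ m * Series (fun n => Rabs (b n) * ((1 + c) / 2) ^ n).
Proof.
  intros Hb Hc m z Hz.
  set (s := (1 + c) / 2). set (d := (1 - c) / 2).
  assert (Hd : 0 < d) by (unfold d; lra).
  assert (Hdm : 0 < d ^ m) by (apply pow_lt; auto).
  assert (Hs : Rabs s < 1) by (unfold s; rewrite Rabs_pos_eq; lra).
  assert (Hex : ex_series (fun n => Rabs (b n) * s ^ n)).
  { generalize (CV_disk_inside b s (good_lt b s Hb Hs)). apply ex_series_ext.
    intro n. rewrite Rabs_mult, <- RPow_abs, (Rabs_pos_eq s) by (unfold s; lra). reflexivity. }
  assert (Hz1 : Rabs z < 1) by lra.
  rewrite Derive_n_PSeries by (apply good_lt; auto). unfold PSeries.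
  eapply Rle_trans. apply Series_Rabs.
  { generalize (CV_disk_inside (PS_derive_n m b) z ltac:(rewrite CV_radius_derive_n; apply good_lt; auto)).
    apply ex_series_ext. intro; reflexivity. }
  eapply Rle_trans. apply Series_le with (b := fun k => INR (fact m) / d ^ m * (Rabs (b (m + k)%nat) * s ^ (m + k))).
  - intro k. split; [apply Rabs_pos|].
    unfold PS_derive_n. rewrite !Rabs_mult, <- RPow_abs.
    rewrite (Rabs_pos_eq (INR (fact (k + m)) / INR (fact k))).
    2: { apply Rlt_le, Rdiv_lt_0_compat; apply INR_fact_lt_0. }
    assert (H1 := fact_ratio k m d c (Rlt_le _ _ Hd) ltac:(lra)).
    replace (c + d) with s in H1 by (unfold s, d; field).
    assert (H2 : Rabs z ^ k <= c ^ k) by (apply pow_incr; split; [apply Rabs_pos|auto]).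
    assert (H3 : 0 <= INR (fact (k + m)) / INR (fact k)) by (apply Rlt_le, Rdiv_lt_0_compat; apply INR_fact_lt_0).
    assert (H4 := Rabs_pos (b (k + m)%nat)).
    replace (m + k)%nat with (k + m)%nat by lia.
    apply Rle_trans with (INR (fact (k + m)) / INR (fact k) * Rabs (b (k + m)%nat) * c ^ k).
    { apply Rmult_le_compat_l; auto. apply Rmult_le_pos; auto. }
    apply Rmult_le_reg_r with (d ^ m); auto.
    replace (INR (fact m) / d ^ m * (Rabs (b (k + m)%nat) * s ^ (k + m)) * d ^ m)
      with (Rabs (b (k + m)%nat) * (INR (fact m) * s ^ (k + m))) by (field; lra).
    replace (INR (fact (k + m)) / INR (fact k) * Rabs (b (k + m)%nat) * c ^ k * d ^ m)
      with (Rabs (b (k + m)%nat) * (INR (fact (k + m)) / INR (fact k) * c ^ k * d ^ m)) by ring.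
    apply Rmult_le_compat_l; auto.
  - assert (He2 := proj1 (ex_series_incr_n (fun n => Rabs (b n) * s ^ n) m) Hex).
    assert (He3 := ex_series_scal_l (INR (fact m) / d ^ m) _ He2).
    revert He3. apply ex_series_ext. intro k; rewrite scal_RR; reflexivity.
  - rewrite Series_scal_l. apply Rmult_le_compat_l.
    { apply Rlt_le, Rdiv_lt_0_compat; auto. apply INR_fact_lt_0. }
    destruct m as [|m].
    + apply Req_le, Series_ext. intro; reflexivity.
    + rewrite (Series_incr_n (fun n => Rabs (b n) * s ^ n) (S m)) by (auto; lia).
      assert (0 <= sum_f_R0 (fun n => Rabs (b n) * s ^ n) (Init.Nat.pred (S m))).
      { apply cond_pos_sum. intro; apply Rmult_le_pos. apply Rabs_pos. apply pow_le; unfold s; lra. }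
      lra.
Qed.


Lemma nat_big r : exists n, r < INR n.
Proof.
  destruct (archimed r) as [H1 H2].
  destruct (Z_lt_le_dec (up r) 0) as [h|h].
  - exists 0%nat. apply IZR_lt in h. simpl. lra.
  - exists (Z.to_nat (up r)). rewrite INR_IZR_INZ, Z2Nat.id by lia. lra.
Qed.

Lemma step b e : good b -> -1 < e <= 0 -> (forall t, -1 < t < e -> PSeries b t = 0) ->
  forall t, -1 < t < Rmin 0 (e + (1 + e) / 3) -> PSeries b t = 0.
Proof.
  intros Hb He Hz t Ht.
  assert (Hm1 := Rmin_l 0 (e + (1 + e) / 3)). assert (Hm2 := Rmin_r 0 (e + (1 + e) / 3)).
  destruct (Rlt_le_dec t e) as [h|h]. { apply Hz; lra. }
  destruct (Req_dec t e) as [->|h']. { exact (deriv_zero_left b e Hb He Hz 0). }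
  assert (Het : e < t) by lra.
  set (c := - e). set (d := (1 - c) / 2).
  set (K := Series (fun n => Rabs (b n) * ((1 + c) / 2) ^ n)).
  assert (HK : 0 <= K).
  { assert (HH := deriv_bound b c Hb ltac:(unfold c; lra) 0 0 ltac:(rewrite Rabs_R0; unfold c; lra)).
    fold K in HH. simpl in HH. assert (HH2 := Rabs_pos (PSeries b 0)).
    replace (1 / 1 * K) with K in HH by field. lra. }
  set (q := (t - e) / d).
  assert (Hd : 0 < d) by (unfold d, c; lra).
  assert (Hq0 : 0 <= q) by (unfold q; apply Rdiv_le_0_compat; lra).
  assert (Hq1 : q < 1).
  { unfold q. apply Rmult_lt_reg_r with d; auto. unfold Rdiv. rewrite Rmult_assoc, Rinv_l by lra.
    unfold d, c. lra. }
  assert (Hbound : forall n, Rabs (PSeries b t) <= K * q ^ (S n)).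
  { intro n.
    destruct (Taylor_Lagrange (PSeries b) n e t Het) as [z [Hz1 Hz2]].
    { intros u Hu k _. apply ex_derive_n_PSeries. apply good_lt; auto.
      rewrite Rabs_left1; lra. }
    rewrite Hz2. rewrite sum_eq_R0.
    2: { intros k _. rewrite (deriv_zero_left b e Hb He Hz k). ring. }
    rewrite Rplus_0_l.
    assert (HB := deriv_bound b c Hb ltac:(unfold c; lra) (S n) z ltac:(rewrite Rabs_left1; unfold c; lra)).
    fold d in HB. fold K in HB.
    rewrite Rabs_mult. rewrite (Rabs_pos_eq ((t - e) ^ S n / INR (fact (S n)))).
    2: { apply Rdiv_le_0_compat. apply pow_le; lra. apply INR_fact_lt_0. }
    eapply Rle_trans. apply Rmult_le_compat_l; [|exact HB].
    { apply Rdiv_le_0_compat. apply pow_le; lra. apply INR_fact_lt_0. }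
    apply Req_le. unfold q, Rdiv. rewrite Rpow_mult_distr, pow_inv.
    field. repeat split; first [apply INR_fact_neq_0 | apply pow_nonzero; lra | lra]. }
  destruct (Req_dec (PSeries b t) 0) as [h0|h0]; auto. exfalso.
  assert (Hp : 0 < Rabs (PSeries b t)) by (apply Rabs_pos_lt; auto).
  set (y := Rabs (PSeries b t) / (K + 1)).
  assert (Hy : 0 < y) by (unfold y; apply Rdiv_lt_0_compat; lra).
  destruct (pow_lt_1_zero q ltac:(rewrite Rabs_pos_eq; lra) y Hy) as [N HN].
  specialize (HN (S N) ltac:(lia)). specialize (Hbound N).
  rewrite Rabs_pos_eq in HN by (apply pow_le; lra).
  assert (K * q ^ S N <= K * y) by (apply Rmult_le_compat_l; lra).
  assert (Hy2 : (K + 1) * y = Rabs (PSeries b t)) by (unfold y; field; lra).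
  nra.
Qed.

Fixpoint es (x1 : R) (j : nat) : R :=
  match j with O => - x1 | S j => Rmin 0 (es x1 j + (1 + es x1 j) / 3) end.

Lemma ident_left b x1 : good b -> 0 <= x1 < 1 ->
  (forall t, -1 < t < - x1 -> PSeries b t = 0) -> forall n, b n = 0.
Proof.
  intros Hb Hx Hz.
  assert (Hinv : forall j, (-1 < es x1 j <= 0 /\ (forall t, -1 < t < es x1 j -> PSeries b t = 0))
     /\ (es x1 j = 0 \/ (1 + INR j / 3) * (1 - x1) <= 1 + es x1 j)).
  { induction j as [|j [[IH1 IH2] IH3]].
    - simpl. split. split; [lra|auto]. right. lra.
    - simpl es. assert (Hm1 := Rmin_l 0 (es x1 j + (1 + es x1 j) / 3)).
      assert (Hm2 := Rmin_r 0 (es x1 j + (1 + es x1 j) / 3)).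
      split. split.
      + split; [apply Rmin_glb_lt; lra | lra].
      + apply step; auto.
      + unfold Rmin in *. destruct (Rle_dec 0 (es x1 j + (1 + es x1 j) / 3)) as [E|E]; [left; reflexivity|].
        destruct IH3 as [E3|E3].
        * exfalso. rewrite E3 in E. lra.
        * right. rewrite S_INR. assert (0 <= INR j) by apply pos_INR. nra. }
  destruct (nat_big (3 / (1 - x1))) as [j Hj].
  assert (Hj2 : 1 < INR j / 3 * (1 - x1)).
  { apply Rmult_lt_compat_r with (r := (1 - x1) / 3) in Hj; [|lra].
    replace (3 / (1 - x1) * ((1 - x1) / 3)) with 1 in Hj by (field; lra). lra. }
  destruct (Hinv j) as [[[Hj3 Hj4] Hj5] Hj6].
  assert (E0 : es x1 j = 0).
  { destruct Hj6 as [E|E]; auto. nra. }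
  rewrite E0 in Hj5.
  intro n.
  assert (H := deriv_zero_left b 0 Hb ltac:(lra) Hj5 n).
  rewrite Derive_n_coef in H.
  2: { unfold good in Hb. destruct (CV_radius b); simpl in *; lra. }
  apply Rmult_integral in H. destruct H as [H|H]; auto. exfalso; apply (INR_fact_neq_0 n); auto.
Qed.

Lemma ident a x1 : good a -> 0 <= x1 < 1 ->
  (forall x, x1 < x < 1 -> PSeries a x = 0) -> forall n, a n = 0.
Proof.
  intros Ha Hx Hz n.
  assert (H := ident_left (refl a) x1 (good_refl a Ha) Hx).
  assert (H2 : refl a n = 0).
  { apply H. intros t Ht. rewrite PSeries_refl. apply Hz. lra. }
  unfold refl in H2. apply Rmult_integral in H2. destruct H2 as [H2|H2]; auto.
  exfalso. apply (pow_nonzero (-1) n); auto; lra.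
Qed.


Definition e1 (n : nat) : R := match n with O => 1 | S _ => 0 end.

Lemma e1_sum x n : sum_f_R0 (fun k => e1 k * x ^ k) n = 1.
Proof. induction n; simpl; [ring|]. rewrite IHn. ring. Qed.

Lemma e1_is x : is_series (fun k => e1 k * x ^ k) 1.
Proof.
  apply is_series_Reals. unfold infinite_sum. intros eps He. exists 0%nat. intros n _.
  rewrite e1_sum. unfold R_dist. rewrite Rminus_diag, Rabs_R0. lra.
Qed.

Lemma PSeries_e1 x : PSeries e1 x = 1.
Proof. unfold PSeries. apply is_series_unique. apply e1_is. Qed.

Lemma good_e1 : good e1.
Proof.
  apply good_intro. intros x _. apply ex_pseries_R. exists 1. apply e1_is.
Qed.

Lemma inside a x : good a -> 0 <= x < 1 -> ex_pseries a x.
Proof. intros; apply CV_radius_inside, good_lt; auto; rewrite Rabs_pos_eq; lra. Qed.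

Lemma good_mult a b : good a -> good b -> good (PS_mult a b).
Proof.
  intros Ha Hb. apply good_intro. intros x Hx.
  apply ex_pseries_mult; apply good_lt; auto; rewrite Rabs_pos_eq; lra.
Qed.

Lemma good_plus a b : good a -> good b -> good (PS_plus a b).
Proof.
  intros Ha Hb. apply good_intro. intros x Hx.
  apply ex_pseries_plus; apply inside; auto.
Qed.

Lemma good_scal c a : good a -> good (PS_scal c a).
Proof.
  intros Ha. apply good_intro. intros x Hx.
  apply ex_pseries_scal. apply Rmult_comm. apply inside; auto.
Qed.

Fixpoint PSpow (a : nat -> R) (k : nat) : nat -> R :=
  match k with O => e1 | S k => PS_mult a (PSpow a k) end.

Lemma good_pow a k : good a -> good (PSpow a k).
Proof. intro Ha; induction k; simpl; [apply good_e1 | apply good_mult; auto]. Qed.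

Lemma PSeries_pow a k x : good a -> Rabs x < 1 -> PSeries (PSpow a k) x = PSeries a x ^ k.
Proof.
  intros Ha Hx; induction k; simpl. apply PSeries_e1.
  rewrite PSeries_mult; try apply good_lt; auto. rewrite IHk; auto. apply good_pow; auto.
Qed.

Definition theta (a : nat -> R) : nat -> R := PS_incr_1 (PS_derive a).

Lemma good_theta a : good a -> good (theta a).
Proof. unfold good, theta. rewrite CV_radius_incr_1, CV_radius_derive. auto. Qed.

Lemma theta_coef a n : theta a n = INR n * a n.
Proof. unfold theta, PS_incr_1, PS_derive. destruct n; [simpl; symmetry; apply Rmult_0_l | reflexivity]. Qed.

Lemma PS_plus_R (a b : nat -> R) n : PS_plus a b n = a n + b n.
Proof. reflexivity. Qed.
Lemma PS_scal_R (c : R) (a : nat -> R) n : PS_scal c a n = c * a n.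
Proof. reflexivity. Qed.

Lemma sum_single f n i : (i <= n)%nat -> (forall k, (k <= n)%nat -> k <> i -> f k = 0) -> sum_f_R0 f n = f i.
Proof.
  intros Hi Hf. induction n.
  - replace i with 0%nat by lia. reflexivity.
  - simpl. destruct (Nat.eq_dec i (S n)) as [->|h].
    + rewrite sum_eq_R0. ring. intros k Hk. apply Hf; lia.
    + rewrite IHn. rewrite (Hf (S n)) by lia. ring. lia. intros; apply Hf; lia.
Qed.

Lemma mult_val a b i j : (forall n, (n < i)%nat -> a n = 0) -> (forall n, (n < j)%nat -> b n = 0) ->
  (forall n, (n < i + j)%nat -> PS_mult a b n = 0) /\ PS_mult a b (i + j) = a i * b j.
Proof.
  intros Ha Hb. unfold PS_mult. split.
  - intros n Hn. apply sum_eq_R0. intros k Hk.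
    destruct (Nat.lt_ge_cases k i) as [h|h]. rewrite Ha; auto; ring.
    rewrite Hb by lia. ring.
  - rewrite (sum_single _ _ i).
    2: lia.
    2: { intros k Hk Hk'.
      destruct (Nat.lt_ge_cases k i) as [h|h]; [rewrite Ha; auto; ring | rewrite Hb by lia; ring]. }
    replace (i + j - i)%nat with j by lia. reflexivity.
Qed.

Lemma pow_val a i k : (forall n, (n < i)%nat -> a n = 0) ->
  (forall n, (n < k * i)%nat -> PSpow a k n = 0) /\ PSpow a k (k * i) = a i ^ k.
Proof.
  intro Ha. induction k as [|k [IH1 IH2]].
  - split. intros; lia. reflexivity.
  - destruct (mult_val a (PSpow a k) i (k * i) Ha IH1) as [H1 H2].
    simpl PSpow. replace (S k * i)%nat with (i + k * i)%nat by lia. split; auto.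
    rewrite H2, IH2. reflexivity.
Qed.

Lemma min_nz (a : nat -> R) n : a n <> 0 -> exists m, a m <> 0 /\ forall k, (k < m)%nat -> a k = 0.
Proof.
  induction n as [n IH] using (well_founded_induction Wf_nat.lt_wf). intro Hn.
  destruct (classic (exists k, (k < n)%nat /\ a k <> 0)) as [[k [Hk1 Hk2]]|h].
  - exact (IH k Hk1 Hk2).
  - exists n. split; auto. intros k Hk. apply NNPP. intro h2. apply h. eauto.
Qed.


Lemma lnpow_deriv j x : 0 < x ->
  is_derive (fun y => (- ln y) ^ S j) x (INR (S j) * (- ln x) ^ j * (- / x)).
Proof. intros. auto_derive. lra. destruct j; simpl; field; lra. Qed.

Lemma deriv_rel al be x1 j : good al -> good be -> 0 < x1 < 1 ->
  (forall x, x1 < x < 1 -> PSeries al x = (- ln x) ^ S j * PSeries be x) ->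
  forall x, x1 < x < 1 ->
  PSeries (theta al) x = - INR (S j) * (- ln x) ^ j * PSeries be x + (- ln x) ^ S j * PSeries (theta be) x.
Proof.
  intros Ha Hb Hx H x Hx'.
  assert (Hx1 : Rabs x < 1) by (rewrite Rabs_pos_eq; lra).
  unfold theta. rewrite !PSeries_incr_1.
  assert (Hal : Derive (PSeries al) x = PSeries (PS_derive al) x)
    by (apply is_derive_unique, is_derive_PSeries, good_lt; auto).
  assert (Hbe : Derive (PSeries be) x = PSeries (PS_derive be) x)
    by (apply is_derive_unique, is_derive_PSeries, good_lt; auto).
  assert (E : Derive (PSeries al) x = Derive (fun y => (- ln y) ^ S j * PSeries be y) x).
  { apply Derive_ext_loc. apply (locally_interval _ x x1 1); simpl; try lra.
    intros y Hy1 Hy2; apply H; lra. }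
  rewrite Derive_mult in E.
  2: { eexists; apply lnpow_deriv; lra. }
  2: { eexists; apply is_derive_PSeries, good_lt; auto. }
  assert (Hd : Derive (fun y : R => (- ln y) ^ S j) x = INR (S j) * (- ln x) ^ j * (- / x))
    by (apply is_derive_unique, lnpow_deriv; lra).
  rewrite Hd in E.
  rewrite Hal, Hbe in E. rewrite E. field. lra.
Qed.

Lemma alg j l A B TA TB : A = l ^ S j * B ->
  TA = - INR (S j) * l ^ j * B + l ^ S j * TB ->
  (B * TA - A * TB) ^ S j = (- INR (S j)) ^ S j * (A ^ j * B ^ (j + 2)).
Proof.
  intros HA HT. subst.
  replace (B * (- INR (S j) * l ^ j * B + l ^ S j * TB) - l ^ S j * B * TB)
    with (- INR (S j) * l ^ j * B ^ 2) by (simpl; ring).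
  rewrite !Rpow_mult_distr. rewrite <- !pow_mult.
  replace (j * S j)%nat with (S j * j)%nat by lia.
  replace (2 * S j)%nat with (j + (j + 2))%nat by lia. rewrite pow_add. ring.
Qed.

Lemma key al be x1 j : good al -> good be -> 0 < x1 < 1 ->
  (forall x, x1 < x < 1 -> PSeries al x = (- ln x) ^ S j * PSeries be x) ->
  forall n, be n = 0.
Proof.
  intros Ha Hb Hx H.
  set (k := INR (S j)). set (c := (- k) ^ S j).
  set (w := (PS_plus (PS_mult be (theta al)) (PS_scal (-1) (PS_mult al (theta be))) : nat -> R)).
  set (R0 := PS_mult (PSpow al j) (PSpow be (j + 2))).
  set (D := (PS_plus (PSpow w (S j)) (PS_scal (- c) R0) : nat -> R)).
  assert (Hgw : good w).
  { apply good_plus. apply good_mult; auto; apply good_theta; auto.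
    apply good_scal, good_mult; auto; apply good_theta; auto. }
  assert (HgR : good R0) by (apply good_mult; apply good_pow; auto).
  assert (HgD : good D) by (apply good_plus; [apply good_pow; auto | apply good_scal; auto]).
  assert (HD : forall n, D n = 0).
  { apply (ident D x1 HgD ltac:(lra)). intros x Hx'.
    assert (Hx1 : Rabs x < 1) by (rewrite Rabs_pos_eq; lra).
    assert (Hx2 : 0 <= x < 1) by lra.
    unfold D. rewrite PSeries_plus.
    2: apply inside; auto; apply good_pow; auto.
    2: apply inside; auto; apply good_scal; auto.
    rewrite PSeries_scal, PSeries_pow by auto.
    unfold R0. rewrite PSeries_mult by (apply good_lt; auto; apply good_pow; auto).
    rewrite !PSeries_pow by auto.
    unfold w. rewrite PSeries_plus.
    2: apply inside; auto; apply good_mult; auto; apply good_theta; auto.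
    2: apply inside; auto; apply good_scal, good_mult; auto; apply good_theta; auto.
    rewrite PSeries_scal, !PSeries_mult by (apply good_lt; auto; apply good_theta; auto).
    assert (Hal := alg j (- ln x) _ _ _ _ (H x Hx') (deriv_rel al be x1 j Ha Hb Hx H x Hx')).
    replace (PSeries be x * PSeries (theta al) x + -1 * (PSeries al x * PSeries (theta be) x))
      with (PSeries be x * PSeries (theta al) x - PSeries al x * PSeries (theta be) x) by ring.
    rewrite Hal. unfold c, k. ring. }
  assert (HL : forall n, PSpow w (S j) n = c * R0 n).
  { intro n. specialize (HD n). unfold D in HD. rewrite PS_plus_R, PS_scal_R in HD. lra. }
  assert (Hc : c <> 0).
  { unfold c, k. apply pow_nonzero. assert (0 < INR (S j)) by (apply lt_0_INR; lia). lra. }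
  intro n. destruct (Req_dec (be n) 0) as [h|h]; auto. exfalso.
  destruct (min_nz be n h) as [m [Hm1 Hm2]].
  destruct (classic (exists i, al i <> 0)) as [[i0 Hi0]|Hno].
  2: {
    assert (Hz : forall x, x1 < x < 1 -> PSeries be x = 0).
    { intros x Hx'. specialize (H x Hx').
      rewrite (PSeries_ext al (fun _ => 0)), PSeries_const_0 in H.
      2: { intro q. apply NNPP. intro hq. apply Hno. eauto. }
      assert (Hl : 0 < - ln x).
      { assert (ln x < ln 1) by (apply ln_increasing; lra). rewrite ln_1 in H0. lra. }
      assert (0 < (- ln x) ^ S j) by (apply pow_lt; auto).
      symmetry in H. apply Rmult_integral in H. destruct H; auto. lra. }
    apply Hm1. apply (ident be x1 Hb ltac:(lra) Hz). }
  destruct (min_nz al i0 Hi0) as [i [Hi1 Hi2]].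
  assert (Hta : forall q, (q < i)%nat -> theta al q = 0).
  { intros q Hq. rewrite theta_coef, Hi2 by auto. ring. }
  assert (Htb : forall q, (q < m)%nat -> theta be q = 0).
  { intros q Hq. rewrite theta_coef, Hm2 by auto. ring. }
  destruct (mult_val be (theta al) m i Hm2 Hta) as [W1 W2].
  destruct (mult_val al (theta be) i m Hi2 Htb) as [W3 W4].
  assert (Hw1 : forall q, (q < m + i)%nat -> w q = 0).
  { intros q Hq. unfold w. rewrite PS_plus_R, PS_scal_R, W1, W3 by lia. ring. }
  assert (Hw2 : w (m + i)%nat = al i * be m * (INR i - INR m)).
  { unfold w. rewrite PS_plus_R, PS_scal_R, W2.
    replace (m + i)%nat with (i + m)%nat by lia. rewrite W4, !theta_coef. ring. }
  destruct (pow_val al i j Hi2) as [P1 P2].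
  destruct (pow_val be m (j + 2) Hm2) as [P3 P4].
  destruct (mult_val _ _ _ _ P1 P3) as [R1 R2].
  fold R0 in R1, R2.
  assert (HRnz : R0 (j * i + (j + 2) * m)%nat <> 0).
  { rewrite R2, P2, P4. apply Rmult_integral_contrapositive_currified; apply pow_nonzero; auto. }
  destruct (Compare_dec.lt_eq_lt_dec i m) as [[Him|Him]|Him].
  - assert (Hwnz : w (m + i)%nat <> 0).
    { rewrite Hw2. assert (INR i <> INR m) by (intro E; apply INR_eq in E; lia).
      repeat apply Rmult_integral_contrapositive_currified; auto. lra. }
    destruct (pow_val w (m + i) (S j) Hw1) as [L1 L2].
    assert (HN := HL (S j * (m + i))%nat). rewrite L2, R1 in HN by nia.
    apply (pow_nonzero _ (S j) Hwnz). rewrite HN. ring.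
  - subst m.
    assert (Hw3 : forall q, (q < i + i + 1)%nat -> w q = 0).
    { intros q Hq. destruct (Nat.eq_dec q (i + i)) as [->|hq].
      rewrite Hw2. ring. apply Hw1. lia. }
    destruct (pow_val w (i + i + 1) (S j) Hw3) as [L1 L2].
    assert (HN := HL (j * i + (j + 2) * i)%nat). rewrite L1 in HN by nia.
    symmetry in HN. apply Rmult_integral in HN. destruct HN as [HN|HN]; auto.
  - destruct (pow_val w (m + i) (S j) Hw1) as [L1 L2].
    assert (HN := HL (j * i + (j + 2) * m)%nat). rewrite L1 in HN by nia.
    symmetry in HN. apply Rmult_integral in HN. destruct HN as [HN|HN]; auto.
Qed.


Lemma main_real_le p p' nu d x1 : good p -> good p' -> 0 < x1 < 1 ->
  (forall x, x1 < x < 1 -> (- ln x) ^ nu * PSeries p x = (- ln x) ^ (nu + d) * PSeries p' x) ->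
  forall n, p n = p' n.
Proof.
  intros Hp Hp' Hx H.
  assert (H2 : forall x, x1 < x < 1 -> PSeries p x = (- ln x) ^ d * PSeries p' x).
  { intros x Hx'. specialize (H x Hx'). rewrite pow_add in H.
    assert (Hl : 0 < - ln x).
    { assert (ln x < ln 1) by (apply ln_increasing; lra). rewrite ln_1 in H0. lra. }
    assert (0 < (- ln x) ^ nu) by (apply pow_lt; auto).
    apply Rmult_eq_reg_l with ((- ln x) ^ nu); [|lra]. rewrite H. ring. }
  destruct d as [|j].
  - intro n.
    assert (Hg : good (PS_plus p (PS_scal (-1) p'))) by (apply good_plus; auto; apply good_scal; auto).
    assert (HH := ident _ x1 Hg ltac:(lra)).
    assert (E : PS_plus p (PS_scal (-1) p') n = 0).
    { apply HH. intros x Hx'. rewrite PSeries_plus.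
      2: apply inside; auto; lra.
      2: apply inside; auto; [apply good_scal; auto | lra].
      rewrite PSeries_scal, (H2 x Hx'). simpl. ring. }
    rewrite PS_plus_R, PS_scal_R in E. lra.
  - assert (Hz := key p p' x1 j Hp Hp' Hx H2).
    assert (Hz2 : forall n, p n = 0).
    { apply (ident p x1 Hp ltac:(lra)). intros x Hx'. rewrite (H2 x Hx').
      rewrite (PSeries_ext p' (fun _ => 0)), PSeries_const_0 by auto. ring. }
    intro n; rewrite Hz, Hz2; auto.
Qed.

Lemma main_real p p' nu nu' x1 : good p -> good p' -> 0 < x1 < 1 ->
  (forall x, x1 < x < 1 -> (- ln x) ^ nu * PSeries p x = (- ln x) ^ nu' * PSeries p' x) ->
  forall n, p n = p' n.
Proof.
  intros Hp Hp' Hx H n.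
  destruct (Nat.le_ge_cases nu nu') as [h|h].
  - replace nu' with (nu + (nu' - nu))%nat in H by lia. apply (main_real_le p p' nu (nu' - nu) x1); auto.
  - symmetry. replace nu with (nu' + (nu - nu'))%nat in H by lia.
    apply (main_real_le p' p nu' (nu - nu') x1); auto. intros; symmetry; auto.
Qed.


Lemma Cx_eq (z w : Cx) : re z = re w -> im z = im w -> z = w.
Proof. destruct z, w; simpl; intros -> ->; reflexivity. Qed.

Lemma RtoC_mul x y : Cmul (RtoC x) (RtoC y) = RtoC (x * y).
Proof. apply Cx_eq; simpl; ring. Qed.

Lemma Cpow_RtoC x n : Cpow (RtoC x) n = RtoC (x ^ n).
Proof. induction n; simpl. reflexivity. rewrite IHn, RtoC_mul. reflexivity. Qed.

Lemma Copp_RtoC u : Copp (RtoC u) = RtoC (- u).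
Proof. apply Cx_eq; simpl; ring. Qed.

Lemma Cexp_RtoC u : Cexp (RtoC u) = RtoC (exp u).
Proof. apply Cx_eq; simpl. rewrite cos_0; ring. rewrite sin_0; ring. Qed.

Lemma Cnorm_RtoC u : Cnorm (RtoC u) = Rabs u.
Proof.
  unfold Cnorm; simpl. rewrite <- sqrt_Rsqr_abs. f_equal. unfold Rsqr. ring.
Qed.

Lemma abs_le_sqrt x y : Rabs x <= sqrt (x ^ 2 + y ^ 2).
Proof.
  rewrite <- sqrt_Rsqr_abs. apply sqrt_le_1_alt. unfold Rsqr. nra.
Qed.

Lemma re_le z : Rabs (re z) <= Cnorm z.
Proof. apply abs_le_sqrt. Qed.
Lemma im_le z : Rabs (im z) <= Cnorm z.
Proof. unfold Cnorm. rewrite Rplus_comm. apply abs_le_sqrt. Qed.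

Lemma cv_re s l : Cseq_cv s l -> Un_cv (fun n => re (s n)) (re l).
Proof.
  intros H eps He. destruct (H eps He) as [N HN]. exists N. intros n Hn.
  unfold R_dist. specialize (HN n Hn). eapply Rle_lt_trans; [|exact HN].
  apply (re_le (Csub (s n) l)).
Qed.
Lemma cv_im s l : Cseq_cv s l -> Un_cv (fun n => im (s n)) (im l).
Proof.
  intros H eps He. destruct (H eps He) as [N HN]. exists N. intros n Hn.
  unfold R_dist. specialize (HN n Hn). eapply Rle_lt_trans; [|exact HN].
  apply (im_le (Csub (s n) l)).
Qed.

Lemma cv_unique s l1 l2 : Cseq_cv s l1 -> Cseq_cv s l2 -> l1 = l2.
Proof.
  intros H1 H2. apply Cx_eq.
  apply (UL_sequence _ _ _ (cv_re _ _ H1) (cv_re _ _ H2)).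
  apply (UL_sequence _ _ _ (cv_im _ _ H1) (cv_im _ _ H2)).
Qed.

Lemma psum_S f n : psum f (S n) = Cadd (psum f n) (f n).
Proof. reflexivity. Qed.

Lemma psum_re a x n :
  re (psum (fun k => Cmul (a k) (Cpow (RtoC x) k)) (S n)) = sum_f_R0 (fun k => re (a k) * x ^ k) n.
Proof.
  induction n.
  - simpl. ring.
  - rewrite psum_S. change (re (Cadd ?z ?w)) with (re z + re w). rewrite IHn, Cpow_RtoC.
    change (sum_f_R0 ?f (S n)) with (sum_f_R0 f n + f (S n)). simpl. ring.
Qed.

Lemma psum_im a x n :
  im (psum (fun k => Cmul (a k) (Cpow (RtoC x) k)) (S n)) = sum_f_R0 (fun k => im (a k) * x ^ k) n.
Proof.
  induction n.
  - simpl. ring.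
  - rewrite psum_S. change (im (Cadd ?z ?w)) with (im z + im w). rewrite IHn, Cpow_RtoC.
    change (sum_f_R0 ?f (S n)) with (sum_f_R0 f n + f (S n)). simpl. ring.
Qed.

Lemma Un_cv_shift u l : Un_cv u l -> Un_cv (fun n => u (S n)) l.
Proof. intros H eps He. destruct (H eps He) as [N HN]. exists N. intros n Hn. apply HN. lia. Qed.

Lemma series_re a x L : series_cv (fun n => Cmul (a n) (Cpow (RtoC x) n)) L ->
  is_series (fun k => re (a k) * x ^ k) (re L).
Proof.
  intro H. apply is_series_Reals. unfold infinite_sum.
  assert (H1 := Un_cv_shift _ _ (cv_re _ _ H)).
  intros eps He. destruct (H1 eps He) as [N HN]. exists N. intros n Hn.
  rewrite <- psum_re. apply HN; auto.
Qed.

Lemma series_im a x L : series_cv (fun n => Cmul (a n) (Cpow (RtoC x) n)) L ->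
  is_series (fun k => im (a k) * x ^ k) (im L).
Proof.
  intro H. apply is_series_Reals. unfold infinite_sum.
  assert (H1 := Un_cv_shift _ _ (cv_im _ _ H)).
  intros eps He. destruct (H1 eps He) as [N HN]. exists N. intros n Hn.
  rewrite <- psum_im. apply HN; auto.
Qed.

Lemma bern_real a t b : bernoulli a t b ->
  exists nu rho (G : R -> Cx), rho > 0 /\
    good (fun k => re (a k)) /\ good (fun k => im (a k)) /\
    (forall x, 0 <= x < 1 -> PSeries (fun k => re (a k)) x = re (G x) /\
                           PSeries (fun k => im (a k)) x = im (G x)) /\
    (forall u, - rho < u < 0 ->
      series_cv (fun n => Cmul (Cdiv (b n) (RtoC (INR (fact n)))) (Cpow (RtoC u) n))
        (Cmul (Cmul (RtoC ((- u) ^ nu)) (G (exp u))) (RtoC (exp (t * u))))).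
Proof.
  intros [F [g [r [nu [Hte [rho [Hrho Hser]]]]]]].
  destruct Hte as [_ [Hdisk _]].
  exists nu, rho, (fun x => F (RtoC x)). split; auto.
  assert (Hs : forall x, 0 <= x < 1 -> series_cv (fun n => Cmul (a n) (Cpow (RtoC x) n)) (F (RtoC x))).
  { intros x Hx. apply Hdisk. unfold unit_disk. rewrite Cnorm_RtoC, Rabs_pos_eq; lra. }
  split; [|split; [|split]].
  - apply good_intro. intros x Hx. apply ex_pseries_R. eexists. apply series_re, Hs; auto.
  - apply good_intro. intros x Hx. apply ex_pseries_R. eexists. apply series_im, Hs; auto.
  - intros x Hx. split; unfold PSeries; apply is_series_unique.
    apply series_re, Hs; auto. apply series_im, Hs; auto.
  - intros u Hu. assert (Hz := Hser (RtoC u)).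
    rewrite Copp_RtoC, Cpow_RtoC, Cexp_RtoC, RtoC_mul, Cexp_RtoC, Cnorm_RtoC in Hz.
    apply Hz. intro E. unfold C0, RtoC in E. injection E. lra.
    rewrite Rabs_left; lra.
Qed.

Theorem mainTheorem7 (t0 : R) (ht0 : t0 > 0) (a a' : nat -> Cx) :
  tame a -> tame a' ->
  forall b b' : nat -> Cx,
    bernoulli a t0 b -> bernoulli a' t0 b' ->
    (forall n : nat, b n = b' n) ->
    forall n : nat, a n = a' n.
Proof.
  intros _ _ b b' Hb Hb' Hbb n.
  destruct (bern_real _ _ _ Hb) as [nu [rho [G [Hrho [Hg1 [Hg2 [HG HS]]]]]]].
  destruct (bern_real _ _ _ Hb') as [nu' [rho' [G' [Hrho' [Hg1' [Hg2' [HG' HS']]]]]]].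
  set (r0 := Rmin rho rho').
  assert (Hr0 : 0 < r0) by (apply Rmin_glb_lt; lra).
  set (x1 := exp (- r0)).
  assert (Hx1 : 0 < x1 < 1).
  { split. apply exp_pos. rewrite <- exp_0. apply exp_increasing. lra. }
  assert (Hrel : forall x, x1 < x < 1 ->
    (- ln x) ^ nu * re (G x) = (- ln x) ^ nu' * re (G' x) /\
    (- ln x) ^ nu * im (G x) = (- ln x) ^ nu' * im (G' x)).
  { intros x Hx.
    assert (Hx0 : 0 < x) by lra.
    set (u := ln x).
    assert (Hu1 : u < 0) by (unfold u; rewrite <- ln_1; apply ln_increasing; lra).
    assert (Hu2 : - r0 < u).
    { unfold u. rewrite <- (ln_exp (- r0)). apply ln_increasing; fold x1; lra. }
    assert (Hm1 := Rmin_l rho rho'). assert (Hm2 := Rmin_r rho rho'). fold r0 in Hm1, Hm2.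
    assert (E1 := HS u ltac:(lra)). assert (E2 := HS' u ltac:(lra)).
    assert (E3 : (fun n => Cmul (Cdiv (b n) (RtoC (INR (fact n)))) (Cpow (RtoC u) n)) =
                 (fun n => Cmul (Cdiv (b' n) (RtoC (INR (fact n)))) (Cpow (RtoC u) n))).
    { apply functional_extensionality. intro k. rewrite Hbb. reflexivity. }
    rewrite E3 in E1.
    assert (E := cv_unique _ _ _ E1 E2).
    unfold u in E. rewrite exp_ln in E by lra.
    assert (Hpos : 0 < exp (t0 * ln x)) by apply exp_pos.
    split.
    - apply (f_equal re) in E. simpl in E.
      apply Rmult_eq_reg_r with (exp (t0 * ln x)); [|lra].
      unfold u; lra.
    - apply (f_equal im) in E. simpl in E.
      apply Rmult_eq_reg_r with (exp (t0 * ln x)); [|lra].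
      unfold u; lra. }
  apply Cx_eq.
  - apply (main_real _ _ nu nu' x1 Hg1 Hg1' Hx1).
    intros x Hx. destruct (HG x ltac:(lra)) as [-> _]. destruct (HG' x ltac:(lra)) as [-> _].
    apply Hrel; auto.
  - apply (main_real _ _ nu nu' x1 Hg2 Hg2' Hx1).
    intros x Hx. destruct (HG x ltac:(lra)) as [_ ->]. destruct (HG' x ltac:(lra)) as [_ ->].
    apply Hrel; auto.
Qed.
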